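(* Let $r\ge2$ and $p\ge2$ be integers, let $\mathcal{A}$ be the adjacency tensor of an $r$-uniform (possibly weighted) hypergraph on $n$ vertices, and let $f(\mathbf{x})=(r-1)!\,\mathcal{A}\mathbf{x}^r/\|\mathbf{x}\|_p^r$ for $\mathbf{x}\neq0$. Let $\mathbf{x}_k\in\mathbb{R}^n$ with $\|\mathbf{x}_k\|_2=1$, $\mathbf{p}_k\in\mathbb{R}^n$, and for $\alpha>0$ let $$\mathbf{x}_{k+1}(\alpha)=\frac{[(2-\alpha\mathbf{x}_k^\top\mathbf{p}_k)^2-\|\alpha\mathbf{p}_k\|^2]\mathbf{x}_k+4\alpha\mathbf{p}_k}{4+\|\alpha\mathbf{p}_k\|^2-(\alpha\mathbf{x}_k^\top\mathbf{p}_k)^2}.$$ Writing $f'(\alpha)$ for the derivative of $\alpha\mapsto f(\mathbf{x}_{k+1}(\alpha))$, we have $$\alpha f'(\alpha)=-\nabla f(\mathbf{x}_{k+1}(\alpha))^\top\mathbf{x}_k.$$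
   Context: For a weighted $r$-uniform hypergraph $G=(V,E)$ with $V=\{1,\dots,n\}$ and edge weights $s(e)>0$, the adjacency tensor $\mathcal{A}=(a_{i_1\cdots i_r})$ is the symmetric order-$r$, dimension-$n$ tensor with $a_{i_1\cdots i_r}=s(e)/(r-1)!$ if $\{i_1,\dots,i_r\}=e\in E$ and $0$ otherwise. $\mathcal{A}\mathbf{x}^r=\sum_{i_1,\dots,i_r}a_{i_1\cdots i_r}x_{i_1}\cdots x_{i_r}$ and $(\mathcal{A}\mathbf{x}^{r-1})_i=\sum_{i_2,\dots,i_r}a_{ii_2\cdots i_r}x_{i_2}\cdots x_{i_r}$. $\|\mathbf{x}\|_p=(\sum_i|x_i|^p)^{1/p}$ and $\|\cdot\|$ is the Euclidean norm. The gradient is $\nabla f(\mathbf{x})=\frac{r!}{\|\mathbf{x}\|_p^r}\big(\mathcal{A}\mathbf{x}^{r-1}-\mathcal{A}\mathbf{x}^r\|\mathbf{x}\|_p^{-p}\mathbf{x}^{\langle p-1\rangle}\big)$, where $(\mathbf{x}^{\langle p-1\rangle})_i=|x_i|^{p-1}\mathrm{sgn}(x_i)$. The vector $\mathbf{x}_{k+1}(\alpha)$ is a unit vector. *)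

(* Defs.v *)
From HB Require Import structures.
From mathcomp Require Import all_boot all_order all_algebra.
From mathcomp Require Import all_classical all_reals all_analysis.
Set Implicit Arguments. Unset Strict Implicit. Unset Printing Implicit Defensive.
Import Order.TTheory GRing.Theory Num.Theory.
Local Open Scope ring_scope.

Section Defs.
Variables (R : realType) (n : nat).
Notation vec := ('I_n -> R).

Definition vdot (x y : vec) : R := \sum_(i < n) x i * y i.
Definition norm2 (x : vec) : R := Num.sqrt (vdot x x).
Definition vscale (a : R) (x : vec) : vec := fun i => a * x i.
Definition vadd (x y : vec) : vec := fun i => x i + y i.

Definition normp (p : nat) (x : vec) : R :=
  powR (\sum_(i < n) `|x i| ^+ p) (p%:R)^-1.

Definition powsgn (p : nat) (x : vec) : vec :=
  fun i => `|x i| ^+ (p - 1) * Num.sg (x i).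

Definition is_weighted_uniform_hypergraph (r : nat)
    (E : {set {set 'I_n}}) (s : {set 'I_n} -> R) : Prop :=
  forall e, e \in E -> #|e| = r /\ 0 < s e.

Definition adj_entry (r : nat) (E : {set {set 'I_n}}) (s : {set 'I_n} -> R)
    (idx : seq 'I_n) : R :=
  if (size idx == r) && ([set i in idx] \in E)
  then s [set i in idx] / (r.-1)`!%:R else 0.

Definition tens_form (r : nat) E s (x : vec) : R :=
  \sum_(t : r.-tuple 'I_n) adj_entry r E s (tval t) * \prod_(j <- tval t) x j.

Definition tens_vec (r : nat) E s (x : vec) : vec := fun i =>
  \sum_(t : r.-1.-tuple 'I_n) adj_entry r E s (i :: tval t) * \prod_(j <- tval t) x j.

Definition fobj (r p : nat) E s (x : vec) : R :=
  (r.-1)`!%:R * tens_form r E s x / (normp p x) ^+ r.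

Definition gradf (r p : nat) E s (x : vec) : vec := fun i =>
  r`!%:R / (normp p x) ^+ r *
  (tens_vec r E s x i - tens_form r E s x * (normp p x) ^- p * powsgn p x i).

Definition xnext (xk pk : vec) (a : R) : vec := fun i =>
  (((2 - a * vdot xk pk) ^+ 2 - (norm2 (vscale a pk)) ^+ 2) * xk i + 4 * a * pk i)
  / (4 + (norm2 (vscale a pk)) ^+ 2 - (a * vdot xk pk) ^+ 2).

End Defs.

(* Main.v *)
Require Import Defs.
From HB Require Import structures.
From mathcomp Require Import all_boot all_order all_algebra.
From mathcomp Require Import all_classical all_reals all_analysis.
From mathcomp Require Import ring lra.
Set Implicit Arguments. Unset Strict Implicit. Unset Printing Implicit Defensive.
Import Order.TTheory GRing.Theory Num.Theory.
Local Open Scope ring_scope.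

Section Comb.
Variables (R : comRingType) (n : nat).

Lemma split_tuple m (F : seq 'I_n -> R) :
  \sum_(t : m.+1.-tuple 'I_n) F t = \sum_(i < n) \sum_(u : m.-tuple 'I_n) F (i :: u).
Proof.
rewrite pair_big /=.
rewrite (reindex (fun p : 'I_n * m.-tuple 'I_n => [tuple of p.1 :: p.2])) //=.
exists (fun t : m.+1.-tuple 'I_n => (thead t, [tuple of behead t])).
  by move=> [i u] _ /=; rewrite theadE; congr pair; apply: val_inj.
by move=> t _ /=; rewrite -tuple_eta.
Qed.

Fixpoint dprod (Y Y' : 'I_n -> R) (s : seq 'I_n) : R :=
  match s with
  | [::] => 0
  | i :: s' => Y' i * \prod_(j <- s') Y j + Y i * dprod Y Y' s'
  end.

Lemma CL (Y Y' : 'I_n -> R) m : forall (c : seq 'I_n -> R),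
  (forall s s', perm_eq s s' -> c s = c s') ->
  \sum_(t : m.+1.-tuple 'I_n) c t * dprod Y Y' t =
  m.+1%:R * \sum_(i < n) Y' i * \sum_(u : m.-tuple 'I_n) c (i :: u) * \prod_(j <- u) Y j.
Proof.
elim: m => [|m IH] c Hc.
  rewrite (split_tuple _ (fun s => c s * dprod Y Y' s)) mul1r; apply: eq_bigr => i _.
  rewrite big_distrr /=; apply: eq_bigr => u _.
  by rewrite (tuple0 u) /= mulr0 addr0 mulrCA.
rewrite (split_tuple _ (fun s => c s * dprod Y Y' s)) /=.
under eq_bigr => i _ do under eq_bigr => u _ do rewrite mulrDr.
under eq_bigr => i _ do rewrite big_split /=.
rewrite big_split /=.
have H2 : \sum_(i < n) \sum_(u : m.+1.-tuple 'I_n) c (i :: u) * (Y i * dprod Y Y' u)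
   = m.+1%:R * \sum_(i < n) Y' i * \sum_(u : m.+1.-tuple 'I_n) c (i :: u) * \prod_(j <- u) Y j.
  transitivity (\sum_(i < n) Y i * (m.+1%:R * \sum_(j < n) Y' j *
       \sum_(v : m.-tuple 'I_n) c (i :: j :: v) * \prod_(k <- v) Y k)).
    apply: eq_bigr => i _; rewrite -(IH (fun s => c (i :: s))); last first.
      by move=> s s' ss'; apply: Hc; rewrite perm_cons.
    rewrite big_distrr /=; apply: eq_bigr => u _; ring.
  under eq_bigr => i _ do rewrite mulrCA big_distrr /=.
  rewrite -big_distrr /=; congr (_ * _).
  rewrite exchange_big /=; apply: eq_bigr => j _.
  rewrite (split_tuple _ (fun s => c (j :: s) * \prod_(k <- s) Y k)) big_distrr /=; apply: eq_bigr => i _.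
  rewrite mulrA !big_distrr /=; apply: eq_bigr => v _.
  rewrite big_cons (Hc (i :: j :: v) (j :: i :: v)); first ring.
  by rewrite (perm_catCA [:: i] [:: j] v).
rewrite H2.
have -> : \sum_(i < n) \sum_(u : m.+1.-tuple 'I_n) c (i :: u) * (Y' i * \prod_(j <- u) Y j)
   = \sum_(i < n) Y' i * \sum_(u : m.+1.-tuple 'I_n) c (i :: u) * \prod_(j <- u) Y j.
  apply: eq_bigr => i _; rewrite big_distrr /=; apply: eq_bigr => u _; ring.
rewrite [in RHS]mulrSr; ring.
Qed.

End Comb.
Section Der.
Variable R : realType.
Implicit Types (f g : R -> R) (x : R).

Lemma isd_ext f g x d : (forall a, f a = g a) -> is_derive x 1 f d -> is_derive x 1 g d.
Proof. by move=> fg; have -> : f = g by apply/funext. Qed.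

Lemma isd_cst x (c : R) : is_derive x 1 (fun _ => c) 0.
Proof. exact: is_derive_cst. Qed.

Lemma isd_id x : is_derive x 1 (fun a : R => a) 1.
Proof. exact: is_derive_id. Qed.

Lemma isd_add f g x df dg : is_derive x 1 f df -> is_derive x 1 g dg ->
  is_derive x 1 (fun a => f a + g a) (df + dg).
Proof. move=> hf hg; exact: is_deriveD. Qed.

Lemma isd_mul f g x df dg : is_derive x 1 f df -> is_derive x 1 g dg ->
  is_derive x 1 (fun a => f a * g a) (f x * dg + g x * df).
Proof. move=> hf hg; have := is_deriveM hf hg; exact. Qed.

Lemma isd_inv f x df : f x != 0 -> is_derive x 1 f df ->
  is_derive x 1 (fun a => (f a)^-1) (- df / (f x) ^+ 2).
Proof.
move=> fx hf; have := is_deriveV fx hf.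
set d := (X in is_derive _ _ _ X) => hd.
suff -> : - df / f x ^+ 2 = d by [].
by rewrite /d /GRing.scale /= mulrC mulNr mulrN.
Qed.

Lemma isd_comp f g x df dg : is_derive (g x) 1 f df -> is_derive x 1 g dg ->
  is_derive x 1 (fun a => f (g a)) (df * dg).
Proof. move=> hf hg; exact: is_derive1_comp. Qed.

Lemma isd_sum (I : Type) (s : seq I) (F : I -> R -> R) (dF : I -> R) x :
  (forall i, is_derive x 1 (F i) (dF i)) ->
  is_derive x 1 (fun a => \sum_(i <- s) F i a) (\sum_(i <- s) dF i).
Proof.
move=> hF; elim: s => [|i s IH].
  rewrite big_nil; apply: (isd_ext _ (isd_cst x 0)) => a; by rewrite big_nil.
rewrite big_cons; apply: (isd_ext _ (isd_add (hF i) IH)) => a; by rewrite big_cons.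
Qed.

Lemma quad_derive f x a C : 0 <= C ->
  (forall z, `|f z - f x - a * (z - x)| <= C * (z - x) ^+ 2) -> is_derive x 1 f a.
Proof.
move=> C0 hb; apply/is_derive1_caratheodory.
exists (fun z => if z == x then a else (f z - f x) / (z - x)); split.
- move=> z; case: eqP => [->|/eqP zx]; first by rewrite !subrr mulr0.
  by rewrite divfK // subr_eq0.
- apply/cvgrPdist_lt => e e0; rewrite eqxx.
  rewrite nearE; apply/nbhs_ballP; exists (e / (C + 1)) => /=.
    by rewrite divr_gt0 // ltr_pwDr.
  move=> z; rewrite /ball /= => hz.
  case: eqP => [_|/eqP zx]; first by rewrite subrr normr0.
  have zx0 : z - x != 0 by rewrite subr_eq0.
  have -> : a - (f z - f x) / (z - x) = - ((f z - f x - a * (z - x)) / (z - x)).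
    by field.
  rewrite normrN normf_div.
  have nz : 0 < `|z - x| by rewrite normr_gt0.
  rewrite ltr_pdivrMr //.
  apply: (le_lt_trans (hb z)).
  rewrite -real_normK ?num_real // expr2 mulrA ltr_pM2r //.
  rewrite distrC in hz.
  move: hz; rewrite ltr_pdivlMr ?ltr_pwDr // => hz.
  apply: le_lt_trans hz; rewrite mulrDr mulr1 ler_wpDr //.
  by rewrite mulrC.
- by rewrite eqxx.
Qed.

Lemma psi_derive x : is_derive x 1 (fun y : R => y * `|y|) (2 * `|x|).
Proof.
apply: (@quad_derive _ _ _ 2) => // z.
rewrite ler_norml; have [z0|z0] := leP 0 z; have [x0|x0] := leP 0 x;
  rewrite ?(ger0_norm z0) ?(ltr0_norm z0) ?(ger0_norm x0) ?(ltr0_norm x0);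
  have h := sqr_ge0 (z - x); rewrite !expr2 in h *; apply/andP; split; nra.
Qed.

Lemma absX_derive x k :
  is_derive x 1 (fun y : R => `|y| ^+ k.+2) (k.+2%:R * `|x| ^+ k.+1 * Num.sg x) /\
  is_derive x 1 (fun y : R => `|y| ^+ k.+2 * Num.sg y) (k.+2%:R * `|x| ^+ k.+1).
Proof.
have hx : x = Num.sg x * `|x| by rewrite -numEsg.
elim: k => [|k [IHA IHB]].
  split.
    apply: (isd_ext _ (is_derive_eq (isd_mul (isd_id x) (isd_id x)) _)).
      by move=> a; rewrite real_normK ?num_real // expr2.
    move: (`|x|) (Num.sg x) hx => t s ->; ring.
  apply: (isd_ext _ (is_derive_eq (psi_derive x) _)).
    by move=> a; rewrite [X in X * _ = _](numEsg a); ring.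
  by rewrite expr1.
split.
  apply: (isd_ext _ (is_derive_eq (isd_mul (isd_id x) IHB) _)).
    move=> a; rewrite !exprS; move: (`|a| ^+ k) => P.
    rewrite normrEsg; ring.
  rewrite !exprS; move: (`|x| ^+ k) => P.
  move: (`|x|) (Num.sg x) hx => t s ->; ring.
apply: (isd_ext _ (is_derive_eq (isd_mul (isd_id x) IHA) _)).
  move=> a; rewrite !exprS; move: (`|a| ^+ k) => P.
  rewrite -[X in X * _ = _]mulr_sg_norm; ring.
rewrite !exprS; move: (`|x| ^+ k) => P.
have s2 : Num.sg x * Num.sg x * `|x| = `|x|.
  by rewrite -mulrA mulr_sg_norm -normrEsg.
move: (`|x|) (Num.sg x) hx s2 => t s -> s2.
have -> : s * t * (k.+2%:R * (t * P) * s) = k.+2%:R * (s * s * t) * t * P by ring.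
rewrite s2; ring.
Qed.

End Der.
Section Y.
Variables (R : realType) (n : nat) (xk pk : 'I_n -> R).

Definition t0 := vdot xk pk.
Definition qq := vdot pk pk.
Definition Dn (a : R) := 4 + a ^+ 2 * qq - (a * t0) ^+ 2.
Definition Un i (a : R) := ((2 - a * t0) ^+ 2 - a ^+ 2 * qq) * xk i + 4 * a * pk i.
Definition Ud i (a : R) := (2 * (2 - a * t0) * (- t0) - 2 * a * qq) * xk i + 4 * pk i.
Definition Dd (a : R) := 2 * a * qq - 2 * a * t0 ^+ 2.
Definition Yd i (a : R) := (Ud i a * Dn a - Un i a * Dd a) / (Dn a) ^+ 2.
Definition cc (a : R) := (4 - a ^+ 2 * (qq - t0 ^+ 2)) / Dn a.

Lemma vdot_sq (u : 'I_n -> R) : 0 <= vdot u u.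
Proof. by rewrite /vdot; apply: sumr_ge0 => i _; rewrite -expr2 sqr_ge0. Qed.

Lemma norm2_vscale a : norm2 (vscale a pk) ^+ 2 = a ^+ 2 * qq.
Proof.
rewrite /norm2 sqr_sqrtr ?vdot_sq // /vdot /qq /vdot /vscale mulr_sumr.
by apply: eq_bigr => i _; ring.
Qed.

Lemma xnextE a i : xnext xk pk a i = Un i a / Dn a.
Proof. by rewrite /xnext norm2_vscale /Un /Dn. Qed.

Lemma sum_sq_lin (A B : R) (u v : 'I_n -> R) :
  \sum_i (A * u i + B * v i) ^+ 2 =
  A ^+ 2 * vdot u u + 2 * A * B * vdot u v + B ^+ 2 * vdot v v.
Proof.
rewrite /vdot !mulr_sumr -!big_split /=; apply: eq_bigr => i _; ring.
Qed.

Lemma Dn_gt0 a : vdot xk xk = 1 -> 0 < Dn a.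
Proof.
move=> hx.
have h : qq - t0 ^+ 2 = \sum_i (1 * pk i + (- t0) * xk i) ^+ 2.
  by rewrite sum_sq_lin hx /qq /t0 (_ : vdot pk xk = vdot xk pk); [ring|
     rewrite /vdot; apply: eq_bigr => i _; ring].
have h0 : 0 <= qq - t0 ^+ 2 by rewrite h; apply: sumr_ge0 => i _; exact: sqr_ge0.
have -> : Dn a = 4 + a ^+ 2 * (qq - t0 ^+ 2) by rewrite /Dn; ring.
have := mulr_ge0 (sqr_ge0 a) h0; lra.
Qed.

Lemma sumUn a : vdot xk xk = 1 -> \sum_i (Un i a) ^+ 2 = (Dn a) ^+ 2.
Proof.
move=> hx; rewrite /Un.
rewrite sum_sq_lin hx -/t0 -/qq /Dn; ring.
Qed.

Lemma keyid a i : Dn a != 0 -> a * Yd i a + xk i = cc a * (Un i a / Dn a).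
Proof.
move=> h; rewrite /Yd /cc /Ud /Un /Dd; move: h; rewrite /Dn => h.
field; exact: h.
Qed.


Lemma isd_quad (x c0 c1 c2 : R) :
  is_derive x 1 (fun a => c0 + c1 * a + c2 * a ^+ 2) (c1 + 2 * c2 * x).
Proof.
apply: (isd_ext _ (is_derive_eq (isd_add (isd_add (isd_cst x c0)
   (isd_mul (isd_cst x c1) (isd_id x))) (isd_mul (isd_cst x c2)
   (isd_mul (isd_id x) (isd_id x)))) _)).
  by move=> b; rewrite expr2.
ring.
Qed.

Lemma y_derive a i : Dn a != 0 ->
  is_derive a 1 (fun b => xnext xk pk b i) (Yd i a).
Proof.
move=> hD.
have hU := isd_quad a (4 * xk i) (4 * pk i - 4 * t0 * xk i) ((t0 ^+ 2 - qq) * xk i).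
have hDn := isd_quad a 4 0 (qq - t0 ^+ 2).
have hU' : is_derive a 1 (Un i) (Ud i a).
  apply: (isd_ext _ (is_derive_eq hU _)).
    by move=> b; rewrite /Un; ring.
  by rewrite /Ud; ring.
have hD' : is_derive a 1 Dn (Dd a).
  apply: (isd_ext _ (is_derive_eq hDn _)).
    by move=> b; rewrite /Dn; ring.
  by rewrite /Dd; ring.
apply: (isd_ext _ (is_derive_eq (isd_mul hU' (isd_inv hD hD')) _)).
  by move=> b; rewrite xnextE.
rewrite /Yd; move: hD; move: (Dn a) => d hd; field; exact: hd.
Qed.

End Y.

Section Main.
Variables (R : realType) (n : nat).

Lemma isd_prodl (s : seq 'I_n) (Yf : 'I_n -> R -> R) (Y' : 'I_n -> R) (x : R) :
  (forall i, is_derive x 1 (Yf i) (Y' i)) ->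
  is_derive x 1 (fun a => \prod_(j <- s) Yf j a) (dprod (fun j => Yf j x) Y' s).
Proof.
move=> hY; elim: s => [|i s IH] /=.
  apply: (isd_ext _ (isd_cst x 1)) => a; by rewrite big_nil.
apply: (isd_ext _ (is_derive_eq (isd_mul (hY i) IH) _)).
  by move=> a; rewrite big_cons.
by rewrite addrC mulrC.
Qed.

Lemma adj_perm r E (s : {set 'I_n} -> R) s1 s2 :
  perm_eq s1 s2 -> adj_entry r E s s1 = adj_entry r E s s2.
Proof.
move=> h; rewrite /adj_entry (perm_size h).
have -> : [set i in s1] = [set i in s2] by apply/setP => i; rewrite !inE (perm_mem h).
by [].
Qed.

Lemma euler_T r' E s (Y : 'I_n -> R) :
  \sum_i Y i * tens_vec r'.+1 E s Y i = tens_form r'.+1 E s Y.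
Proof.
rewrite /tens_form (split_tuple _ (fun t => adj_entry r'.+1 E s t * \prod_(j <- t) Y j)).
apply: eq_bigr => i _; rewrite /tens_vec big_distrr /=; apply: eq_bigr => u _.
rewrite big_cons; ring.
Qed.

Lemma T_derive r' E s (y : 'I_n -> R -> R) (Y' : 'I_n -> R) (x : R) :
  (forall i, is_derive x 1 (y i) (Y' i)) ->
  is_derive x 1 (fun a => tens_form r'.+1 E s (fun i => y i a))
    (r'.+1%:R * \sum_i Y' i * tens_vec r'.+1 E s (fun i => y i x) i).
Proof.
move=> hy; rewrite /tens_form.
have := @isd_sum R _ (index_enum (r'.+1.-tuple 'I_n))
  (fun t a => adj_entry r'.+1 E s t * \prod_(j <- t) y j a)
  (fun t => adj_entry r'.+1 E s t * dprod (fun j => y j x) Y' t) x.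
move=> H; apply: is_derive_eq; first apply: H.
  move=> t; apply: (is_derive_eq (isd_mul (isd_cst x _) (isd_prodl t hy))).
  by rewrite mulr0 addr0.
rewrite (CL (fun j => y j x) Y' r' (adj_perm r'.+1 E s)). reflexivity.
Qed.

End Main.

Section Main2.
Variables (R : realType) (n : nat).

Lemma pow_derive m (x : R) : is_derive x 1 (fun z : R => z ^+ m) (m%:R * x ^+ m.-1).
Proof.
have := @is_deriveX R R (fun z => z) m x 1 1 (isd_id x).
move=> h; apply: (isd_ext _ (is_derive_eq h _)).
  by move=> z; rewrite exprfctE.
by rewrite /GRing.scale /= mulr1.
Qed.

Lemma S_derive k (y : 'I_n -> R -> R) (Y' : 'I_n -> R) (x : R) :
  (forall i, is_derive x 1 (y i) (Y' i)) ->
  is_derive x 1 (fun a => \sum_i `|y i a| ^+ k.+2)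
    (k.+2%:R * \sum_i powsgn k.+2 (fun i => y i x) i * Y' i).
Proof.
move=> hy.
have := @isd_sum R _ (index_enum 'I_n) (fun i a => `|y i a| ^+ k.+2)
  (fun i => (k.+2%:R * `|y i x| ^+ k.+1 * Num.sg (y i x)) * Y' i) x.
move=> H; apply: is_derive_eq; first apply: H.
  move=> i; exact: (isd_comp (absX_derive (y i x) k).1 (hy i)).
rewrite mulr_sumr; apply: eq_bigr => i _; rewrite /powsgn.
have -> : (k.+2 - 1 = k.+1)%N by [].
ring.
Qed.

Lemma grad_sum r p E s (Y Z : 'I_n -> R) :
  \sum_i gradf r p E s Y i * Z i =
  r`!%:R / normp p Y ^+ r * (\sum_i tens_vec r E s Y i * Z i -
    tens_form r E s Y * normp p Y ^- p * \sum_i powsgn p Y i * Z i).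
Proof.
rewrite mulr_sumr -sumrB mulr_sumr; apply: eq_bigr => i _; rewrite /gradf; ring.
Qed.

Lemma lin_split (F Y Y' : 'I_n -> R) (c a : R) :
  \sum_i F i * (c * Y i - a * Y' i) = c * \sum_i F i * Y i - a * \sum_i F i * Y' i.
Proof. rewrite !mulr_sumr -sumrB; apply: eq_bigr => i _; ring. Qed.

Lemma powsgn_sum k (Y : 'I_n -> R) :
  \sum_i powsgn k.+2 Y i * Y i = \sum_i `|Y i| ^+ k.+2.
Proof.
apply: eq_bigr => i _; rewrite /powsgn.
have -> : (k.+2 - 1 = k.+1)%N by [].
by rewrite -mulrA -normrEsg [RHS]exprSr.
Qed.

End Main2.

Unset Implicit Arguments.

Theorem lemma3p4 (R : realType) (n r p : nat)
  (E : {set {set 'I_n}}) (s : {set 'I_n} -> R)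
  (xk pk : 'I_n -> R) (alpha : R) :
  (2 <= r)%N -> (2 <= p)%N ->
  is_weighted_uniform_hypergraph r E s ->
  norm2 xk = 1 -> 0 < alpha ->
  derivable (fun a : R => fobj r p E s (xnext xk pk a)) alpha 1 /\
  alpha * derive1 (fun a : R => fobj r p E s (xnext xk pk a)) alpha
    = - vdot (gradf r p E s (xnext xk pk alpha)) xk.
Proof.
move=> hr hp _ hx1 ha.
have hxx : vdot xk xk = 1.
  by rewrite -(sqr_sqrtr (vdot_sq xk)) -/(norm2 xk) hx1 expr1n.
case: r hr => [|r'] // _.
case: p hp => [|[|k]] // _.
pose y := fun i b => xnext xk pk b i.
pose Y' := fun i => (Yd xk pk i alpha : R).
have hDa : Dn xk pk alpha != 0 by rewrite gt_eqF // Dn_gt0.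
have hy : forall i, is_derive alpha 1 (y i) (Y' i) by move=> i; exact: y_derive.
have hT := T_derive r' E s hy.
have hS := S_derive k hy.
pose Y := xnext xk pk alpha.
pose S := \sum_i `|Y i| ^+ k.+2.
have hSpos : 0 < S.
  have hsum : \sum_i (Un xk pk i alpha) ^+ 2 != 0.
    by rewrite sumUn // expf_neq0.
  have [i hi] : exists i, Un xk pk i alpha != 0.
    case/boolP: [exists i, Un xk pk i alpha != 0] => [/existsP //|/existsPn h].
    move/eqP: hsum; rewrite big1 // => i _.
    by move: (h i); rewrite negbK => /eqP ->; rewrite expr0n.
  have hYi : Y i != 0 by rewrite /Y xnextE mulf_neq0 ?invr_eq0.
  rewrite /S (bigD1 i) //=.
  have h1 : 0 < `|Y i| ^+ k.+2 by rewrite exprn_gt0 // normr_gt0.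
  have h2 : 0 <= \sum_(j | j != i) `|Y j| ^+ k.+2.
    by apply: sumr_ge0 => j _; rewrite exprn_ge0.
  lra.
pose P := (k.+2)%:R : R.
have hN : is_derive alpha 1 (fun b => normp k.+2 (xnext xk pk b))
   (P^-1 * powR S (P^-1 - 1) * (P * \sum_i powsgn k.+2 Y i * Y' i)).
  have h1 := is_derive1_powR P^-1 hSpos.
  have h2 := @isd_comp R _ (fun a => \sum_i `|y i a| ^+ k.+2)
     alpha _ _ h1 hS.
  apply: (isd_ext _ h2).
  by move=> b; rewrite /normp.
pose N := normp k.+2 Y.
have hM := @isd_comp R (fun z => z ^+ r'.+1) (fun b => normp k.+2 (xnext xk pk b))
   alpha _ _ (pow_derive r'.+1 N) hN.
have hNpos : 0 < N by rewrite /N /normp powR_gt0.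
have hMne : N ^+ r'.+1 != 0 by rewrite expf_neq0 // gt_eqF.
have hF := isd_mul (isd_mul (isd_cst alpha (r'`!%:R)) hT)
   (@isd_inv R (fun b => normp k.+2 (xnext xk pk b) ^+ r'.+1) alpha _ hMne hM).
have hF' := isd_ext (g := fun a => fobj r'.+1 k.+2 E s (xnext xk pk a)) (fun b => erefl) hF.
case: hF' => hd hv; split; first exact: hd.
rewrite derive1E hv.
pose c := (cc xk pk alpha : R).
have hxk : forall i, xk i = c * Y i - alpha * Y' i.
  move=> i; have := keyid i hDa; rewrite -(xnextE xk pk alpha i) => h.
  by rewrite /Y -h /Y'; ring.
have hsum : \sum_i gradf r'.+1 k.+2 E s Y i * xk i =
   \sum_i gradf r'.+1 k.+2 E s Y i * (c * Y i - alpha * Y' i).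
  by apply: eq_bigr => i _; rewrite -hxk.
rewrite /vdot hsum.
rewrite (lin_split (gradf r'.+1 k.+2 E s Y) Y Y' c alpha).
rewrite (grad_sum _ _ _ _ Y Y) (grad_sum _ _ _ _ Y Y').

have eY : y^~ alpha = Y by [].
have eN : normp k.+2 (xnext xk pk alpha) = N by [].
rewrite eY eN -/N.
have eA : \sum_i Y' i * tens_vec r'.+1 E s Y i = \sum_i tens_vec r'.+1 E s Y i * Y' i.
  by apply: eq_bigr => i _; rewrite mulrC.
have eT : \sum_i tens_vec r'.+1 E s Y i * Y i = tens_form r'.+1 E s Y.
  by rewrite -euler_T; apply: eq_bigr => i _; rewrite mulrC.
rewrite eA eT powsgn_sum -/S.
have eNS : N = S `^ P^-1 by [].
have hNp : N ^+ k.+2 = S.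
  rewrite eNS -powR_mulrn ?powR_ge0 // -powRrM mulVf ?powRr1 ?(ltW hSpos) //.
  by rewrite /P pnatr_eq0.
have ePow : S `^ (P^-1 - 1) = N / S.
  rewrite powRB ?powRr1 ?(ltW hSpos) //.
  by apply/implyP => _; rewrite gt_eqF.
rewrite ePow hNp factS natrM /=.
have hN0 : N != 0 by rewrite gt_eqF.
have hS0 : S != 0 by rewrite gt_eqF.
have hQ : N ^+ r' != 0 by rewrite expf_neq0.
have hP : P != 0 by rewrite /P pnatr_eq0.
rewrite (exprS N r').
move: hQ; move: (N ^+ r') (tens_form r'.+1 E s Y)
  (\sum_(i < n) powsgn k.+2 Y i * Y' i) (\sum_(i < n) tens_vec r'.+1 E s Y i * Y' i)
  => Q T B A hQ.
field.
rewrite hS0 hQ hN0 /=.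
by rewrite gt_eqF //; have := ler0n R k; lra.
Qed.
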